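(* Let $\mathcal{R}_i=(X_i,\Phi_i,\check X_i,\check\Phi_i)$, $i\in\{1,2\}$, be root data and $f:\mathcal{R}_2\to\mathcal{R}_1$ a homomorphism of root data with $f:X_2\to X_1$ surjective. Put $A=X_1/f(\Phi_2^\top)$, let $h_1:X_1\to A$ be the natural projection and $h_2:X_2/\Phi_2^\top\to A$, $h_2(x+\Phi_2^\top)=f(x)+f(\Phi_2^\top)$. Then $\phi:X_2\to X_1\oplus(X_2/\Phi_2^\top)$, $\phi(x)=(f(x),x+\Phi_2^\top)$, defines an isomorphism of root data $\phi:\mathcal{R}_2\to\mathcal{R}_1\oplus_{(A,h_1,h_2)}(\mathcal{R}_2)_{\mathrm{rad}}$, and $f=p_1\circ\phi$, where $p_1$ is the projection of the central product onto its first factor.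
   Context: Root data $\mathcal{R}=(X,\Phi,\check X,\check\Phi)$ (reduced), with perfect pairing $\langle-,-\rangle$. A homomorphism of root data $\mathcal{R}'\to\mathcal{R}$ is a $\mathbb{Z}$-linear $f:X'\to X$ with a bijection $\tau:\Phi\to\Phi'$ with $f(\tau(\alpha))=\alpha$ and $\check f(\check\alpha)=\tau(\alpha)^\vee$ ($\check f$ the transpose). For $S\subseteq X$: $S^\top=\{x\in X: nx\in\mathbb{Z}S\text{ for some integer }n>0\}$, $S^\perp=\{y\in\check X:\langle x,y\rangle=0\ \forall x\in S\}$; similarly for subsets of $\check X$. The radical of $\mathcal{R}$ is the torus (root datum with no roots) $\mathcal{R}_{\mathrm{rad}}=(X/\Phi^\top,\emptyset,\check\Phi^\perp,\emptyset)$ with induced pairing. For a submodule $B\subseteq X$ containing $\Phi$, the induced root datum is $\mathcal{R}_B=(B,\Phi,\mathrm{Hom}(B,\mathbb{Z}),\check\iota_B(\check\Phi))$, $\check\iota_B(y)=\langle-,y\rangle|_B$. Central product: for root data $\mathcal{R},\mathcal{R}'$ with lattices $X,X'$, a $\mathbb{Z}$-module $A$ and surjections $h:X\to A$, $h':X'\to A$ killing the roots, $\mathcal{R}\oplus_{(A,h,h')}\mathcal{R}'$ is the root datum induced from the direct sum $\mathcal{R}\oplus\mathcal{R}'$ by the submodule $X\oplus_A X'=\{(x,x'): h(x)=h'(x')\}$. *)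

(* Defs.v *)
(* Lattices are modelled as a carrier type
   with a membership predicate and operations; all axioms are stated as
   predicates (is_lattice, is_root_datum) and only quantify over members. *)
From Stdlib Require Import ZArith List Classical ClassicalEpsilon
  FunctionalExtensionality PropExtensionality.
Open Scope Z_scope.

Record lattice := Lattice {
  lcar :> Type;
  lmem : lcar -> Prop;
  l0 : lcar;
  ladd : lcar -> lcar -> lcar;
  lopp : lcar -> lcar }.
Arguments lmem {l} _.
Arguments l0 {l}.
Arguments ladd {l} _ _.
Arguments lopp {l} _.

Definition lsub {L : lattice} (x y : L) : L := ladd x (lopp y).

Fixpoint nmul {L : lattice} (n : nat) (x : L) : L :=
  match n with O => l0 | S n' => ladd x (nmul n' x) end.

Definition zmul {L : lattice} (z : Z) (x : L) : L :=
  match z with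
  | Z0 => l0
  | Zpos p => nmul (Pos.to_nat p) x
  | Zneg p => lopp (nmul (Pos.to_nat p) x)
  end.

Fixpoint lincomb {L : lattice} (c : list Z) (b : list L) : L :=
  match c, b with
  | c0 :: c', b0 :: b' => ladd (zmul c0 b0) (lincomb c' b')
  | _, _ => l0
  end.

Definition is_abgroup (L : lattice) : Prop :=
  lmem (@l0 L) /\
  (forall x y : L, lmem x -> lmem y -> lmem (ladd x y)) /\
  (forall x : L, lmem x -> lmem (lopp x)) /\
  (forall x y z : L, lmem x -> lmem y -> lmem z ->
     ladd x (ladd y z) = ladd (ladd x y) z) /\
  (forall x y : L, lmem x -> lmem y -> ladd x y = ladd y x) /\
  (forall x : L, lmem x -> ladd l0 x = x) /\
  (forall x : L, lmem x -> ladd (lopp x) x = l0).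

Definition free_finite_rank (L : lattice) : Prop :=
  exists b : list L, Forall lmem b /\
    forall x : L, lmem x ->
      exists! c : list Z, length c = length b /\ lincomb c b = x.

Definition is_lattice (L : lattice) : Prop := is_abgroup L /\ free_finite_rank L.

Definition additive_map {L M : lattice} (f : L -> M) : Prop :=
  (forall x, lmem x -> lmem (f x)) /\
  (forall x y, lmem x -> lmem y -> f (ladd x y) = ladd (f x) (f y)).

Definition additive_Z {L : lattice} (g : L -> Z) : Prop :=
  forall x y, lmem x -> lmem y -> g (ladd x y) = g x + g y.

Definition injective_on {L M : lattice} (f : L -> M) : Prop :=
  forall x y, lmem x -> lmem y -> f x = f y -> x = y.
Definition surjective_on {L M : lattice} (f : L -> M) : Prop :=
  forall y, lmem y -> exists x, lmem x /\ f x = y.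

Definition in_span {L : lattice} (S : L -> Prop) (x : L) : Prop :=
  exists (c : list Z) (b : list L), Forall S b /\ lincomb c b = x.

Definition saturation {L : lattice} (S : L -> Prop) (x : L) : Prop :=
  lmem x /\ exists n : Z, n > 0 /\ in_span S (zmul n x).

Definition image {L M : lattice} (f : L -> M) (S : L -> Prop) (y : M) : Prop :=
  exists x, lmem x /\ S x /\ y = f x.

(* quotient L / S : elements are cosets x + S (as subsets of L) *)
Definition qclass {L : lattice} (S : L -> Prop) (x : L) : L -> Prop :=
  fun y => lmem y /\ S (lsub y x).
Definition qrep {L : lattice} (S : L -> Prop) (q : L -> Prop) : L :=
  epsilon (inhabits (@l0 L)) (fun x => lmem x /\ q = qclass S x).
Definition quot (L : lattice) (S : L -> Prop) : lattice :=
  {| lcar := L -> Prop;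
     lmem := fun q => exists x, lmem x /\ q = qclass S x;
     l0 := qclass S l0;
     ladd := fun p q => qclass S (ladd (qrep S p) (qrep S q));
     lopp := fun p => qclass S (lopp (qrep S p)) |}.
Definition qproj {L : lattice} (S : L -> Prop) (x : L) : quot L S := qclass S x.

Definition sublat (L : lattice) (P : L -> Prop) : lattice :=
  {| lcar := lcar L; lmem := fun x => lmem x /\ P x;
     l0 := l0; ladd := ladd; lopp := lopp |}.

Definition prodlat (L M : lattice) : lattice :=
  {| lcar := (lcar L * lcar M)%type;
     lmem := fun p => lmem (fst p) /\ lmem (snd p);
     l0 := (l0, l0);
     ladd := fun p q => (ladd (fst p) (fst q), ladd (snd p) (snd q));
     lopp := fun p => (lopp (fst p), lopp (snd p)) |}.

(* Hom(L, Z): Z-linear forms on L (normalised to vanish off L) *)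
Definition homlat (L : lattice) : lattice :=
  {| lcar := lcar L -> Z;
     lmem := fun g => additive_Z g /\ (forall x, ~ lmem x -> g x = 0);
     l0 := fun _ => 0;
     ladd := fun g h x => g x + h x;
     lopp := fun g x => - g x |}.

(* (X, Phi, Xc, Phic): roots are the predicate Rroots on X, the bijection
   Phi -> Phic is alpha |-> Rcor alpha (so Phic = Rcor(Phi)). *)
Record preRootDatum := PreRootDatum {
  RX : lattice;
  RXc : lattice;
  Rpair : RX -> RXc -> Z;
  Rroots : RX -> Prop;
  Rcor : RX -> RXc }.

Definition perfect_pairing {L M : lattice} (pr : L -> M -> Z) : Prop :=
  (forall x, lmem x -> additive_Z (pr x)) /\
  (forall y, lmem y -> additive_Z (fun x => pr x y)) /\
  (forall g : M -> Z, additive_Z g ->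
     exists x, lmem x /\ (forall y, lmem y -> g y = pr x y) /\
       forall x', lmem x' -> (forall y, lmem y -> g y = pr x' y) -> x' = x) /\
  (forall g : L -> Z, additive_Z g ->
     exists y, lmem y /\ (forall x, lmem x -> g x = pr x y) /\
       forall y', lmem y' -> (forall x, lmem x -> g x = pr x y') -> y' = y).

(* reduced root datum *)
Definition is_root_datum (R : preRootDatum) : Prop :=
  is_lattice (RX R) /\ is_lattice (RXc R) /\
  perfect_pairing (Rpair R) /\
  (forall a, Rroots R a -> lmem a) /\
  (exists l : list (RX R), forall a, Rroots R a <-> In a l) /\
  (forall a, Rroots R a -> lmem (Rcor R a)) /\
  (forall a b, Rroots R a -> Rroots R b -> Rcor R a = Rcor R b -> a = b) /\
  (forall a, Rroots R a -> Rpair R a (Rcor R a) = 2) /\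
  (forall a b, Rroots R a -> Rroots R b ->
     Rroots R (lsub b (zmul (Rpair R b (Rcor R a)) a))) /\
  (* s_{a^v}(Phic) = Phic, s_{a^v}(y) = y - <a, y> a^v *)
  (forall a b, Rroots R a -> Rroots R b ->
     exists c, Rroots R c /\
       Rcor R c = lsub (Rcor R b) (zmul (Rpair R a (Rcor R b)) (Rcor R a))) /\
  (forall a, Rroots R a -> ~ Rroots R (zmul 2 a)).

Definition is_hom (R' R : preRootDatum) (f : RX R' -> RX R) : Prop :=
  additive_map f /\
  exists tau : RX R -> RX R',
    (forall a, Rroots R a -> Rroots R' (tau a)) /\
    (forall a b, Rroots R a -> Rroots R b -> tau a = tau b -> a = b) /\
    (forall a', Rroots R' a' -> exists a, Rroots R a /\ tau a = a') /\
    (forall a, Rroots R a -> f (tau a) = a) /\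
    exists fc : RXc R -> RXc R',
      additive_map fc /\
      (forall x' y, lmem x' -> lmem y -> Rpair R' x' (fc y) = Rpair R (f x') y) /\
      (forall a, Rroots R a -> fc (Rcor R a) = Rcor R' (tau a)).

Definition is_iso (R' R : preRootDatum) (f : RX R' -> RX R) : Prop :=
  is_hom R' R f /\ injective_on f /\ surjective_on f.

Definition root_perp (R : preRootDatum) (y : RXc R) : Prop :=
  forall a, Rroots R a -> Rpair R a y = 0.
Definition rad_lattice (R : preRootDatum) : lattice :=
  quot (RX R) (saturation (Rroots R)).
Definition radical (R : preRootDatum) : preRootDatum :=
  {| RX := rad_lattice R;
     RXc := sublat (RXc R) (root_perp R);
     Rpair := fun q y => Rpair R (qrep (saturation (Rroots R)) q) y;
     Rroots := fun _ => False;
     Rcor := fun _ => l0 |}.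

Definition dsum (R R' : preRootDatum) : preRootDatum :=
  {| RX := prodlat (RX R) (RX R');
     RXc := prodlat (RXc R) (RXc R');
     Rpair := fun p q => Rpair R (fst p) (fst q) + Rpair R' (snd p) (snd q);
     Rroots := fun p => (Rroots R (fst p) /\ snd p = l0) \/
                        (fst p = l0 /\ Rroots R' (snd p));
     Rcor := fun p =>
       if excluded_middle_informative (Rroots R (fst p))
       then (Rcor R (fst p), l0) else (l0, Rcor R' (snd p)) |}.

Definition iotaB (R : preRootDatum) (B : RX R -> Prop) (y : RXc R)
  : homlat (sublat (RX R) B) :=
  fun x => if excluded_middle_informative (lmem x /\ B x) then Rpair R x y else 0.
Definition induced (R : preRootDatum) (B : RX R -> Prop) : preRootDatum :=
  {| RX := sublat (RX R) B;
     RXc := homlat (sublat (RX R) B);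
     Rpair := fun x g => g x;
     Rroots := Rroots R;
     Rcor := fun a => iotaB R B (Rcor R a) |}.

Definition central_product (R R' : preRootDatum) (A : lattice)
  (h : RX R -> A) (h' : RX R' -> A) : preRootDatum :=
  induced (dsum R R') (fun p => h (fst p) = h' (snd p)).

(* Main.v *)
Require Import Defs.
From Stdlib Require Import ZArith List.
From Stdlib Require Import Lia Classical ClassicalEpsilon
  FunctionalExtensionality PropExtensionality Permutation.
Open Scope Z_scope.
Section Grp.
Variable L : lattice.
Hypothesis HL : is_abgroup L.

Lemma g_mem0 : lmem (@l0 L). Proof. apply HL. Qed.
Lemma g_memD (x y : L) : lmem x -> lmem y -> lmem (ladd x y). Proof. apply HL. Qed.
Lemma g_memN (x : L) : lmem x -> lmem (lopp x). Proof. apply HL. Qed.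
Lemma g_addA (x y z : L) : lmem x -> lmem y -> lmem z ->
  ladd x (ladd y z) = ladd (ladd x y) z. Proof. apply HL. Qed.
Lemma g_addC (x y : L) : lmem x -> lmem y -> ladd x y = ladd y x. Proof. apply HL. Qed.
Lemma g_add0 (x : L) : lmem x -> ladd l0 x = x. Proof. apply HL. Qed.
Lemma g_addNr (x : L) : lmem x -> ladd (lopp x) x = l0. Proof. apply HL. Qed.

Hint Resolve g_mem0 g_memD g_memN : gm.

Lemma g_addr0 (x : L) : lmem x -> ladd x l0 = x.
Proof. intros; rewrite g_addC; auto with gm; apply g_add0; auto. Qed.
Lemma g_addrN (x : L) : lmem x -> ladd x (lopp x) = l0.
Proof. intros; rewrite g_addC; auto with gm; apply g_addNr; auto. Qed.
Lemma g_addKr (x y : L) : lmem x -> lmem y -> ladd (lopp x) (ladd x y) = y.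
Proof. intros; rewrite g_addA, g_addNr, g_add0; auto with gm. Qed.
Lemma g_cancel (x y z : L) : lmem x -> lmem y -> lmem z -> ladd x y = ladd x z -> y = z.
Proof. intros Hx Hy Hz E. rewrite <- (g_addKr x y), <- (g_addKr x z), E; auto. Qed.
Lemma g_oppK (x : L) : lmem x -> lopp (lopp x) = x.
Proof. intros. apply (g_cancel (lopp x)); auto with gm. rewrite g_addrN, g_addNr; auto with gm. Qed.
Lemma g_opp0 : lopp (@l0 L) = l0.
Proof. apply (g_cancel l0); auto with gm. rewrite g_addrN, g_add0; auto with gm. Qed.
Lemma g_oppD (x y : L) : lmem x -> lmem y -> lopp (ladd x y) = ladd (lopp x) (lopp y).
Proof. intros. apply (g_cancel (ladd x y)); auto with gm.
  rewrite g_addrN by auto with gm.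
  rewrite (g_addC (lopp x)) by auto with gm.
  rewrite g_addA by auto with gm. rewrite <- (g_addA x y) by auto with gm.
  rewrite g_addrN, g_addr0, g_addrN; auto. Qed.
Lemma g_add4 (a b c d : L) : lmem a -> lmem b -> lmem c -> lmem d ->
  ladd (ladd a b) (ladd c d) = ladd (ladd a c) (ladd b d).
Proof. intros. rewrite <- !g_addA by auto with gm. f_equal.
  rewrite !g_addA by auto with gm. f_equal. apply g_addC; auto. Qed.
Lemma g_memS (x y : L) : lmem x -> lmem y -> lmem (lsub x y).
Proof. unfold lsub; auto with gm. Qed.
Hint Resolve g_memS : gm.
Lemma g_subDD (a b c d : L) : lmem a -> lmem b -> lmem c -> lmem d ->
  lsub (ladd a b) (ladd c d) = ladd (lsub a c) (lsub b d).
Proof. intros; unfold lsub. rewrite g_oppD, g_add4; auto with gm. Qed.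
Lemma g_subNN (a c : L) : lmem a -> lmem c ->
  lsub (lopp a) (lopp c) = lopp (lsub a c).
Proof. intros; unfold lsub. rewrite g_oppD, g_oppK; auto with gm. Qed.
Lemma g_subrr (a : L) : lmem a -> lsub a a = l0.
Proof. intros; apply g_addrN; auto. Qed.
Lemma g_subr0 (a : L) : lmem a -> lsub a l0 = a.
Proof. intros; unfold lsub; rewrite g_opp0, g_addr0; auto. Qed.
Lemma g_subN (a b : L) : lmem a -> lmem b -> lopp (lsub a b) = lsub b a.
Proof. intros; unfold lsub. rewrite g_oppD, g_oppK, g_addC; auto with gm. Qed.
Lemma g_subtrans (a b c : L) : lmem a -> lmem b -> lmem c ->
  ladd (lsub a b) (lsub b c) = lsub a c.
Proof. intros; unfold lsub. rewrite <- g_addA by auto with gm. f_equal.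
  rewrite g_addA, g_addNr, g_add0; auto with gm. Qed.
Lemma g_subK (a b : L) : lmem a -> lmem b -> ladd (lsub a b) b = a.
Proof. intros; unfold lsub. rewrite <- g_addA, g_addNr, g_addr0; auto with gm. Qed.
Lemma g_subeq0 (a b : L) : lmem a -> lmem b -> lsub a b = l0 -> a = b.
Proof. intros Ha Hb E. rewrite <- (g_subK a b), E, g_add0; auto. Qed.

Lemma g_memnmul n (x : L) : lmem x -> lmem (nmul n x).
Proof. induction n; simpl; auto with gm. Qed.
Lemma g_memz z (x : L) : lmem x -> lmem (zmul z x).
Proof. destruct z; simpl; auto using g_memnmul with gm. Qed.
Hint Resolve g_memnmul g_memz : gm.

Lemma zmul_succ z (x : L) : lmem x -> zmul (Z.succ z) x = ladd x (zmul z x).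
Proof.
  intros Hx. destruct z as [|p|p].
  - simpl. rewrite g_addr0; auto.
  - simpl. replace (Pos.to_nat (p+1)) with (S (Pos.to_nat p)) by lia. reflexivity.
  - destruct (Pos.eq_dec p 1) as [->|Hp].
    + simpl. rewrite g_addr0, g_addrN; auto.
    + replace (Z.succ (Z.neg p)) with (Z.neg (Pos.pred p)) by lia. simpl.
      replace (Pos.to_nat p) with (S (Pos.to_nat (Pos.pred p))) by lia. simpl.
      rewrite g_oppD, g_addA, g_addrN, g_add0; auto with gm.
Qed.
Lemma zmul_pred z (x : L) : lmem x -> zmul (Z.pred z) x = ladd (lopp x) (zmul z x).
Proof.
  intros Hx. rewrite <- (Z.succ_pred z) at 2. rewrite zmul_succ by auto.
  rewrite g_addKr; auto with gm. Qed.
Lemma zmul0 (x : L) : zmul 0 x = l0. Proof. reflexivity. Qed.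
Lemma zmul1 (x : L) : lmem x -> zmul 1 x = x.
Proof. intros; simpl; apply g_addr0; auto. Qed.

Lemma zmulDl a b (x : L) : lmem x -> zmul (a + b) x = ladd (zmul a x) (zmul b x).
Proof.
  intros Hx. induction a using Z.peano_ind.
  - simpl. rewrite g_add0; auto with gm.
  - replace (Z.succ a + b) with (Z.succ (a + b)) by lia.
    rewrite !zmul_succ, IHa, g_addA; auto with gm.
  - replace (Z.pred a + b) with (Z.pred (a + b)) by lia.
    rewrite !zmul_pred, IHa, g_addA; auto with gm.
Qed.
Lemma zmulDr a (x y : L) : lmem x -> lmem y -> zmul a (ladd x y) = ladd (zmul a x) (zmul a y).
Proof.
  intros Hx Hy. induction a using Z.peano_ind.
  - simpl. rewrite g_add0; auto with gm.
  - rewrite !zmul_succ, IHa, g_add4; auto with gm.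
  - rewrite !zmul_pred, IHa, g_oppD, g_add4; auto with gm.
Qed.
Lemma zmulN a (x : L) : lmem x -> zmul (- a) x = lopp (zmul a x).
Proof. intros Hx. apply (g_cancel (zmul a x)); auto with gm.
  rewrite <- zmulDl, g_addrN by auto with gm. replace (a + - a) with 0 by lia. reflexivity. Qed.
Lemma zmulM a b (x : L) : lmem x -> zmul (a * b) x = zmul a (zmul b x).
Proof.
  intros Hx. induction a using Z.peano_ind.
  - reflexivity.
  - replace (Z.succ a * b) with (b + a * b) by lia.
    rewrite zmulDl, zmul_succ, IHa; auto with gm.
  - replace (Z.pred a * b) with (- b + a * b) by lia.
    rewrite zmulDl, zmul_pred, IHa, zmulN; auto with gm.
Qed.
Lemma zmul_0r a : zmul a (@l0 L) = l0.
Proof. induction a using Z.peano_ind.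
  - reflexivity.
  - rewrite zmul_succ, IHa, g_add0; auto with gm.
  - rewrite zmul_pred, IHa, g_opp0, g_add0; auto with gm. Qed.
Lemma zmulNr a (x : L) : lmem x -> zmul a (lopp x) = lopp (zmul a x).
Proof. intros. apply (g_cancel (zmul a x)); auto with gm.
  rewrite <- zmulDr, !g_addrN, zmul_0r; auto with gm. Qed.
Lemma zmul_sub a (x y : L) : lmem x -> lmem y -> zmul a (lsub x y) = lsub (zmul a x) (zmul a y).
Proof. intros; unfold lsub; rewrite zmulDr, zmulNr; auto with gm. Qed.

Lemma g_memlc c (b : list L) : Forall lmem b -> lmem (lincomb c b).
Proof. revert c; induction b; intros [|c0 c] Hb; simpl; auto with gm.
  inversion Hb; subst; auto with gm. Qed.

End Grp.

Section Maps.
Variables L M : lattice.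
Variable phi : L -> M.
Hypothesis Hmem : forall x, lmem x -> lmem (phi x).
Hypothesis Hadd : forall x y, lmem x -> lmem y -> phi (ladd x y) = ladd (phi x) (phi y).
Hypothesis Hopp : forall x, lmem x -> phi (lopp x) = lopp (phi x).
Hypothesis H0 : phi l0 = l0.
Hypothesis HLm : forall x y : L, lmem x -> lmem y -> lmem (ladd x y).
Hypothesis HL0 : lmem (@l0 L).

Lemma map_nmul n x : lmem x -> lmem (nmul n x) /\ phi (nmul n x) = nmul n (phi x).
Proof. intros Hx; induction n; simpl; auto. destruct IHn as [A B]; split; auto.
  rewrite Hadd, B; auto. Qed.
Hypothesis HLN : forall x : L, lmem x -> lmem (lopp x).
Lemma map_zmul z x : lmem x -> phi (zmul z x) = zmul z (phi x).
Proof. intros Hx; destruct z; simpl; auto.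
  - apply map_nmul; auto.
  - rewrite Hopp by apply map_nmul, Hx. f_equal; apply map_nmul; auto. Qed.
Lemma memz_weak z (x : L) : lmem x -> lmem (zmul z x).
Proof. intros; destruct z; simpl; auto; try apply HLN; apply map_nmul; auto. Qed.
Lemma memlc_weak c (b : list L) : Forall lmem b -> lmem (lincomb c b).
Proof. revert c; induction b; intros [|c0 c] Hb; simpl; auto.
  inversion Hb; subst. apply HLm; auto using memz_weak. Qed.
Lemma map_lincomb c b : Forall lmem b -> phi (lincomb c b) = lincomb c (map phi b).
Proof. revert c; induction b; intros [|c0 c] Hb; simpl; auto.
  inversion Hb; subst. rewrite Hadd, map_zmul, IHb; auto using memz_weak, memlc_weak. Qed.
End Maps.

#[global] Hint Resolve g_mem0 g_memD g_memN g_memS g_memnmul g_memz g_memlc : gm.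
Section AddZ.
Variable L : lattice.
Hypothesis HL : is_abgroup L.
Variable g : L -> Z.
Hypothesis Hg : additive_Z g.
Lemma aZ_0 : g l0 = 0.
Proof. pose proof (Hg l0 l0 (g_mem0 _ HL) (g_mem0 _ HL)).
  rewrite g_add0 in H by auto with gm. lia. Qed.
Lemma aZ_N x : lmem x -> g (lopp x) = - g x.
Proof. intros. assert (E := Hg (lopp x) x (g_memN _ HL _ H) H).
  rewrite (g_addNr _ HL x H), aZ_0 in E. lia. Qed.
Lemma aZ_sub x y : lmem x -> lmem y -> g (lsub x y) = g x - g y.
Proof. intros; unfold lsub; rewrite Hg, aZ_N; auto with gm; lia. Qed.
Lemma aZ_z n x : lmem x -> g (zmul n x) = n * g x.
Proof. intros Hx. induction n using Z.peano_ind.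
  - simpl; apply aZ_0.
  - rewrite zmul_succ, Hg, IHn; auto with gm; lia.
  - rewrite zmul_pred, Hg, aZ_N, IHn; auto with gm; lia. Qed.
End AddZ.

Definition subgrp {L : lattice} (S : L -> Prop) : Prop :=
  (forall x, S x -> lmem x) /\ S l0 /\
  (forall x y, S x -> S y -> S (ladd x y)) /\ (forall x, S x -> S (lopp x)).

Section Span.
Variable L : lattice.
Hypothesis HL : is_abgroup L.

Lemma lc_trunc (c : list Z) (b : list L) :
  lincomb c b = lincomb (firstn (length b) c) (firstn (length c) b) /\
  length (firstn (length b) c) = length (firstn (length c) b).
Proof. revert c; induction b; intros [|c0 c]; simpl; auto.
  destruct (IHb c) as [A B]. rewrite <- A, B. auto. Qed.
Lemma lc_app c c' (b b' : list L) : length c = length b ->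
  lincomb (c ++ c') (b ++ b') = ladd (lincomb c b) (lincomb c' b') \/ ~ (Forall lmem b /\ Forall lmem b').
Proof. intros E. destruct (classic (Forall lmem b /\ Forall lmem b')) as [[Hb Hb']|]; [left|right; auto].
  revert c E; induction b; intros [|c0 c] E; simpl in *; try discriminate.
  - rewrite g_add0; auto with gm.
  - inversion Hb; subst. rewrite IHb by auto. rewrite g_addA; auto with gm. Qed.
Lemma lc_scale n c (b : list L) : Forall lmem b ->
  zmul n (lincomb c b) = lincomb (map (Z.mul n) c) b.
Proof. revert c; induction b; intros [|c0 c] Hb; simpl; try apply zmul_0r; auto.
  inversion Hb; subst. rewrite zmulDr, IHb, zmulM; auto with gm. Qed.

Lemma zmul_m1 (x : L) : lmem x -> zmul (-1) x = lopp x.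
Proof. intros. simpl. rewrite g_addr0; auto. Qed.

Variable S : L -> Prop.
Hypothesis HS : forall x, S x -> lmem x.
Lemma span_mem x : in_span S x -> lmem x.
Proof. intros (c & b & Hb & <-). apply g_memlc; auto. eapply Forall_impl; eauto. Qed.
Lemma span_add x y : in_span S x -> in_span S y -> in_span S (ladd x y).
Proof. intros (c & b & Hb & <-) (d & e & He & <-).
  destruct (lc_trunc c b) as [E1 E2]. rewrite E1.
  exists (firstn (length b) c ++ d), (firstn (length c) b ++ e). split.
  - apply Forall_app; split; auto. rewrite <- (firstn_skipn (length c) b) in Hb.
    apply Forall_app in Hb; tauto.
  - destruct (lc_app (firstn (length b) c) d (firstn (length c) b) e E2) as [->|C]; auto.
    exfalso; apply C. split.
    + rewrite <- (firstn_skipn (length c) b) in Hb. apply Forall_app in Hb.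
      eapply Forall_impl; [|apply Hb]; auto.
    + eapply Forall_impl; eauto. Qed.
Lemma span_scale n x : in_span S x -> in_span S (zmul n x).
Proof. intros (c & b & Hb & <-). exists (map (Z.mul n) c), b. split; auto.
  rewrite lc_scale; auto. eapply Forall_impl; eauto. Qed.

Lemma sat_subgrp : subgrp (saturation S).
Proof. split; [|split; [|split]].
  - intros x [H _]; auto.
  - split; auto with gm. exists 1; split; [lia|]. rewrite zmul_0r by auto. exists nil, nil; split; auto.
  - intros x y [Hx (n & Hn & Sx)] [Hy (m & Hm & Sy)]. split; auto with gm.
    exists (n * m). split; [lia|]. rewrite zmulDr by auto.
    rewrite (Z.mul_comm n m) at 1. rewrite !zmulM by auto.
    apply span_add; apply span_scale; auto.
  - intros x [Hx (n & Hn & Sx)]. split; auto with gm. exists n; split; auto.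
    rewrite zmulNr, <- zmul_m1 by auto with gm. apply span_scale; auto. Qed.
Lemma sat_incl x : S x -> saturation S x.
Proof. intros Sx. split; auto. exists 1; split; [lia|]. exists (1 :: nil), (x :: nil).
  split; auto. simpl. rewrite g_addr0; auto with gm. Qed.
End Span.

Section Sub.
Variable L : lattice.
Hypothesis HL : is_abgroup L.
Variable S : L -> Prop.
Hypothesis HS : subgrp S.
Lemma sg_mem x : S x -> lmem x. Proof. apply HS. Qed.
Lemma sg_0 : S l0. Proof. apply HS. Qed.
Lemma sg_add x y : S x -> S y -> S (ladd x y). Proof. apply HS. Qed.
Lemma sg_opp x : S x -> S (lopp x). Proof. apply HS. Qed.
Lemma sg_sub x y : S x -> S y -> S (lsub x y). Proof. intros; apply sg_add, sg_opp; auto. Qed.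

Lemma qclass_eq u v : lmem u -> lmem v -> S (lsub u v) -> qclass S u = qclass S v.
Proof. intros Hu Hv E. apply functional_extensionality; intro y.
  apply propositional_extensionality. unfold qclass. split; intros [Hy Hs]; split; auto.
  - rewrite <- (g_subtrans _ HL y u v) by auto. apply sg_add; auto.
  - rewrite <- (g_subtrans _ HL y v u) by auto. apply sg_add; auto.
    rewrite <- g_subN by auto. apply sg_opp; auto. Qed.
Lemma qclass_inv u v : lmem u -> qclass S u = qclass S v -> S (lsub u v).
Proof. intros Hu E. assert (qclass S u u) by (split; auto; rewrite g_subrr; auto using sg_0).
  rewrite E in H. apply H. Qed.
Lemma qrep_mem q : (exists x, lmem x /\ q = qclass S x) ->
  lmem (qrep S q) /\ q = qclass S (qrep S q).
Proof. intros Hq. unfold qrep. apply epsilon_spec. exact Hq. Qed.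
Lemma qrep_class x : lmem x -> lmem (qrep S (qclass S x)) /\ S (lsub (qrep S (qclass S x)) x).
Proof. intros Hx. destruct (qrep_mem (qclass S x)) as [A B]; eauto.
  split; auto. apply qclass_inv; auto. Qed.
Lemma quot_add x y : lmem x -> lmem y ->
  @ladd (quot L S) (qclass S x) (qclass S y) = qclass S (ladd x y).
Proof. intros. simpl. destruct (qrep_class x) as [A B]; auto.
  destruct (qrep_class y) as [C D]; auto. apply qclass_eq; auto with gm.
  rewrite g_subDD by auto. apply sg_add; auto. Qed.
Lemma quot_opp x : lmem x -> @lopp (quot L S) (qclass S x) = qclass S (lopp x).
Proof. intros. simpl. destruct (qrep_class x) as [A B]; auto.
  apply qclass_eq; auto with gm. rewrite g_subNN by auto. apply sg_opp; auto. Qed.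
Lemma quot_0 : @l0 (quot L S) = qclass S l0. Proof. reflexivity. Qed.
Lemma quot_memc x : lmem x -> @lmem (quot L S) (qclass S x).
Proof. intros; simpl; eauto. Qed.
End Sub.

Section Transport.
Variables L M : lattice.
Hypothesis HL : is_abgroup L.
Variable phi : L -> M.
Hypothesis Hmem : forall x, lmem x -> lmem (phi x).
Hypothesis Hadd : forall x y, lmem x -> lmem y -> phi (ladd x y) = ladd (phi x) (phi y).
Hypothesis Hopp : forall x, lmem x -> phi (lopp x) = lopp (phi x).
Hypothesis H0 : phi l0 = l0.
Hypothesis Hsurj : forall y, lmem y -> exists x, lmem x /\ phi x = y.

Lemma transport_abgroup : is_abgroup M.
Proof.
  split; [|split; [|split; [|split; [|split; [|split]]]]].
  - rewrite <- H0; auto with gm.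
  - intros x y Hx Hy. destruct (Hsurj x Hx) as (a & Ha & <-).
    destruct (Hsurj y Hy) as (b & Hb & <-). rewrite <- Hadd; auto with gm.
  - intros x Hx. destruct (Hsurj x Hx) as (a & Ha & <-). rewrite <- Hopp; auto with gm.
  - intros x y z Hx Hy Hz. destruct (Hsurj x Hx) as (a & Ha & <-).
    destruct (Hsurj y Hy) as (b & Hb & <-). destruct (Hsurj z Hz) as (c & Hc & <-).
    rewrite <- !Hadd by auto with gm. rewrite g_addA; auto.
  - intros x y Hx Hy. destruct (Hsurj x Hx) as (a & Ha & <-).
    destruct (Hsurj y Hy) as (b & Hb & <-). rewrite <- !Hadd by auto. rewrite g_addC; auto.
  - intros x Hx. destruct (Hsurj x Hx) as (a & Ha & <-). rewrite <- H0, <- Hadd, g_add0; auto with gm.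
  - intros x Hx. destruct (Hsurj x Hx) as (a & Ha & <-). rewrite <- Hopp, <- Hadd, g_addNr; auto with gm.
Qed.

Hypothesis Hinj : forall x y, lmem x -> lmem y -> phi x = phi y -> x = y.
Lemma transport_free : free_finite_rank L -> free_finite_rank M.
Proof.
  intros (b & Hb & Hu).
  assert (ML : forall c, phi (lincomb c b) = lincomb c (map phi b)).
  { intros c. apply (map_lincomb L M phi); auto with gm. }
  exists (map phi b). split.
  - apply Forall_map. eapply Forall_impl; eauto.
  - intros y Hy. destruct (Hsurj y Hy) as (x & Hx & <-).
    destruct (Hu x Hx) as (c & [Hc1 Hc2] & Hc3). exists c. split.
    + rewrite length_map. split; auto. rewrite <- ML, Hc2; auto.
    + intros c' [E1 E2]. apply Hc3. rewrite length_map in E1. split; auto.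
      apply Hinj; auto with gm. rewrite ML; auto.
Qed.
End Transport.

Definition zsum {A} (F : A -> Z) (l : list A) : Z := fold_right (fun a acc => F a + acc) 0 l.
Lemma zsum_perm {A} (F : A -> Z) l l' : Permutation l l' -> zsum F l = zsum F l'.
Proof. induction 1; simpl; lia. Qed.
Lemma zsum_map {A B} (F : B -> Z) (g : A -> B) l : zsum F (map g l) = zsum (fun a => F (g a)) l.
Proof. induction l; simpl; lia. Qed.
Lemma zsum_ext {A} (F G : A -> Z) l : (forall a, In a l -> F a = G a) -> zsum F l = zsum G l.
Proof. induction l; simpl; intros; auto. rewrite H, IHl; auto. Qed.
Lemma zsum_add {A} (F G : A -> Z) l : zsum (fun a => F a + G a) l = zsum F l + zsum G l.
Proof. induction l; simpl; lia. Qed.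
Lemma zsum_scal {A} (F : A -> Z) k l : zsum (fun a => k * F a) l = k * zsum F l.
Proof. induction l; simpl; lia. Qed.
Lemma zsum_0 {A} l : zsum (fun _ : A => 0) l = 0.
Proof. induction l; simpl; lia. Qed.
Lemma zsum_sq_ge {A} (F : A -> Z) l a : In a l -> F a * F a <= zsum (fun x => F x * F x) l.
Proof. induction l; simpl; intros []; subst.
  - pose proof (zsum_scal (fun _ => 0) 0 l). assert (0 <= zsum (fun x => F x * F x) l).
    { clear. induction l; simpl; nia. } lia.
  - specialize (IHl H). nia. Qed.

Lemma NoDup_map_inj {A B} (g : A -> B) l : NoDup l ->
  (forall x y, In x l -> In y l -> g x = g y -> x = y) -> NoDup (map g l).
Proof. induction 1; simpl; intros Hi; constructor.
  - intros Hin. apply in_map_iff in Hin as (y & E & Hy).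
    assert (y = x) by (apply Hi; auto). subst; auto.
  - apply IHNoDup; intros; apply Hi; auto. Qed.

Section RD.
Variable R : preRootDatum.
Hypothesis HR : is_root_datum R.

Notation pr := (Rpair R).
Lemma rd_X : is_abgroup (RX R). Proof. apply HR. Qed.
Lemma rd_Xc : is_abgroup (RXc R). Proof. apply HR. Qed.
Lemma rd_P1 x : lmem x -> additive_Z (pr x). Proof. apply HR. Qed.
Lemma rd_P2 y : lmem y -> additive_Z (fun x => pr x y). Proof. apply HR. Qed.
Lemma rd_rm a : Rroots R a -> lmem a. Proof. apply HR. Qed.
Lemma rd_cm a : Rroots R a -> lmem (Rcor R a). Proof. apply HR. Qed.
Lemma rd_2 a : Rroots R a -> pr a (Rcor R a) = 2. Proof. apply HR. Qed.
Lemma rd_s a b : Rroots R a -> Rroots R b ->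
     Rroots R (lsub b (zmul (pr b (Rcor R a)) a)). Proof. apply HR. Qed.
Hint Resolve rd_X rd_Xc rd_rm rd_cm : gm.

Lemma pr_x0 y : lmem y -> pr l0 y = 0.
Proof. intros. apply (aZ_0 _ rd_X (fun x => pr x y)). apply rd_P2; auto. Qed.
Lemma pr_0y x : lmem x -> pr x l0 = 0.
Proof. intros. apply (aZ_0 _ rd_Xc (pr x)). apply rd_P1; auto. Qed.

Lemma rd_list : exists l, NoDup l /\ forall a, Rroots R a <-> In a l.
Proof. destruct HR as (_&_&_&_&(l&Hl)&_).
  assert (dec : forall x y : RX R, {x = y} + {x <> y}) by (intros; apply excluded_middle_informative).
  exists (nodup dec l). split; [apply NoDup_nodup|]. intros a; rewrite nodup_In; auto. Qed.

Variable l : list (RX R).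
Hypothesis Hnd : NoDup l.
Hypothesis Hl : forall a, Rroots R a <-> In a l.

Definition Bv (y w : RXc R) : Z := zsum (fun g => pr g y * pr g w) l.

Lemma refl_perm a : Rroots R a ->
  Permutation l (map (fun g => lsub g (zmul (pr g (Rcor R a)) a)) l).
Proof.
  intros Ha. set (s := fun g => lsub g (zmul (pr g (Rcor R a)) a)).
  assert (Hsv : forall g, Rroots R g -> pr (s g) (Rcor R a) = - pr g (Rcor R a)).
  { intros g Hg. unfold s. rewrite (aZ_sub _ rd_X (fun x => pr x (Rcor R a))), 
      (aZ_z _ rd_X (fun x => pr x (Rcor R a))), rd_2; auto with gm; try lia; apply rd_P2; auto with gm. }
  assert (Hss : forall g, Rroots R g -> s (s g) = g).
  { intros g Hg. unfold s at 1. rewrite Hsv by auto. rewrite zmulN by auto with gm.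
    unfold s, lsub. rewrite g_oppK by auto with gm. apply (g_subK _ rd_X); auto with gm. }
  apply NoDup_Permutation; auto.
  - apply NoDup_map_inj; auto. intros x y Hx Hy E. apply Hl in Hx; apply Hl in Hy.
    rewrite <- (Hss x), <- (Hss y), E; auto.
  - intros x; split; intros Hx.
    + apply in_map_iff. exists (s x). split; [apply Hss; apply Hl; auto|].
      apply Hl, rd_s; auto; apply Hl; auto.
    + apply in_map_iff in Hx as (g & <- & Hg). apply Hl, rd_s; auto. apply Hl; auto.
Qed.

Lemma key_identity a y : Rroots R a -> lmem y ->
  2 * Bv y (Rcor R a) = pr a y * Bv (Rcor R a) (Rcor R a).
Proof.
  intros Ha Hy. unfold Bv.
  set (F := fun g => pr g y * pr g (Rcor R a)).
  assert (E : zsum F l = zsum F (map (fun g => lsub g (zmul (pr g (Rcor R a)) a)) l))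
    by (apply zsum_perm, refl_perm; auto).
  rewrite zsum_map in E.
  rewrite (zsum_ext (fun g => F (lsub g (zmul (pr g (Rcor R a)) a))) (fun g => - F g + pr a y * (pr g (Rcor R a) * pr g (Rcor R a)))) in E.
  - rewrite zsum_add, zsum_scal in E.
    assert (zsum (fun g => - F g) l = - zsum F l) by (clear; induction l; simpl; lia).
    lia.
  - intros g Hg. apply Hl in Hg. unfold F.
    rewrite (aZ_sub _ rd_X (fun x => pr x y)), (aZ_z _ rd_X (fun x => pr x y)),
      (aZ_sub _ rd_X (fun x => pr x (Rcor R a))), (aZ_z _ rd_X (fun x => pr x (Rcor R a))), rd_2;
      auto with gm; try (apply rd_P2; auto with gm). nia.
Qed.

Lemma N_pos a : Rroots R a -> 4 <= Bv (Rcor R a) (Rcor R a).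
Proof. intros Ha. unfold Bv. pose proof (zsum_sq_ge (fun g => pr g (Rcor R a)) l a).
  cbv beta in H. rewrite rd_2 in H by auto. apply H, Hl; auto. Qed.

Definition Pw (w : RXc R) := forall u, lmem u -> (forall a, Rroots R a -> pr u (Rcor R a) = 0) -> pr u w = 0.

Lemma Bv_add y w w' : lmem w -> lmem w' -> Bv y (ladd w w') = Bv y w + Bv y w'.
Proof. intros. unfold Bv. rewrite <- zsum_add. apply zsum_ext. intros g Hg.
  apply Hl in Hg. rewrite (rd_P1 g); auto with gm. lia. Qed.
Lemma Bv_z y k w : lmem w -> Bv y (zmul k w) = k * Bv y w.
Proof. intros. unfold Bv. rewrite <- zsum_scal. apply zsum_ext. intros g Hg.
  apply Hl in Hg. rewrite (aZ_z _ rd_Xc (pr g)); auto with gm; try apply rd_P1; auto with gm. lia. Qed.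

Lemma lc_repr c b : Forall (Rroots R) b ->
  exists M w, 0 < M /\ lmem w /\ Pw w /\ forall y, lmem y -> M * pr (lincomb c b) y = Bv y w.
Proof.
  revert c; induction b as [|be b IH]; intros [|c0 c] Hb.
  1-3: exists 1, l0; repeat split; auto with gm;
    [intros u Hu _; apply pr_0y; auto
    |intros y Hy; simpl; rewrite pr_x0 by auto; unfold Bv;
     rewrite (zsum_ext _ (fun _ => 0)), zsum_0; auto; intros g Hg;
     rewrite pr_0y; [lia|apply rd_rm, Hl; auto]].
  inversion Hb; subst. destruct (IH c H2) as (M & w & HM & Hw & HPw & Hrep).
  set (N := Bv (Rcor R be) (Rcor R be)). pose proof (N_pos be H1).
  exists (M * N), (ladd (zmul N w) (zmul (2 * c0 * M) (Rcor R be))).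
  repeat split; [nia|auto with gm| |].
  - intros u Hu Hz. rewrite (rd_P1 u), (aZ_z _ rd_Xc (pr u)), (aZ_z _ rd_Xc (pr u)), HPw, Hz;
      auto with gm; try lia; apply rd_P1; auto.
  - intros y Hy. cbn [lincomb]. rewrite (rd_P2 y), (aZ_z _ rd_X (fun x => pr x y)); auto with gm;
      [|apply rd_P2; auto|eapply g_memlc; auto with gm; eapply Forall_impl; [|apply H2]; auto with gm].
    rewrite Bv_add, !Bv_z by auto with gm.
    rewrite <- Hrep by auto. pose proof (key_identity be y H1 Hy). fold N in H0. nia.
Qed.

Lemma orth_zero z : lmem z -> saturation (Rroots R) z ->
  (forall a, Rroots R a -> pr z (Rcor R a) = 0) -> z = l0.
Proof.
  intros Hz [_ (n & Hn & c & b & Hb & Hc)] Ho.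
  destruct (lc_repr c b Hb) as (M & w & HM & Hw & HPw & Hrep).
  assert (Hall : forall y, lmem y -> M * (n * pr z y) = Bv y w).
  { intros y Hy. rewrite <- Hrep, Hc by auto. rewrite (aZ_z _ rd_X (fun x => pr x y)); auto.
    apply rd_P2; auto. }
  assert (Bw : Bv w w = 0) by (rewrite <- Hall, HPw; auto; lia).
  assert (Hg0 : forall g, In g l -> pr g w = 0).
  { intros g Hg. pose proof (zsum_sq_ge (fun g => pr g w) l g Hg). unfold Bv in Bw. cbv beta in H.
    assert (0 <= zsum (fun x => pr x w * pr x w) l) by lia. nia. }
  assert (Hz0 : forall y, lmem y -> pr z y = 0).
  { intros y Hy. assert (Bv y w = 0).
    { unfold Bv. rewrite (zsum_ext _ (fun _ => 0)), zsum_0; auto. intros g Hg; rewrite Hg0; auto; lia. }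
    rewrite <- Hall in H by auto. nia. }
  destruct HR as (_&_&(_&_&P3&_)&_).
  destruct (P3 (fun _ => 0)) as (x & Hx & _ & Hu). { intros ? ? ? ?; lia. }
  rewrite (Hu z), (Hu l0); auto with gm.
  - intros; rewrite pr_x0; auto.
  - intros; rewrite Hz0; auto.
Qed.
End RD.

Lemma orth_zero_main (R : preRootDatum) : is_root_datum R -> forall z, lmem z ->
  saturation (Rroots R) z -> (forall a, Rroots R a -> Rpair R z (Rcor R a) = 0) -> z = l0.
Proof. intros HR. destruct (rd_list R HR) as (l & Hnd & Hl). apply (orth_zero R HR l Hnd Hl). Qed.

Section TR.
Variables R R' : preRootDatum.
Hypothesis HR : is_root_datum R.
Variable phi : RX R -> RX R'.
Variable psi : RXc R -> RXc R'.
Hypothesis phimem : forall x, lmem x -> lmem (phi x).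
Hypothesis phiadd : forall x y, lmem x -> lmem y -> phi (ladd x y) = ladd (phi x) (phi y).
Hypothesis phiopp : forall x, lmem x -> phi (lopp x) = lopp (phi x).
Hypothesis phi0 : phi l0 = l0.
Hypothesis phisurj : forall y, lmem y -> exists x, lmem x /\ phi x = y.
Hypothesis phiinj : forall x y, lmem x -> lmem y -> phi x = phi y -> x = y.
Hypothesis psimem : forall x, lmem x -> lmem (psi x).
Hypothesis psiadd : forall x y, lmem x -> lmem y -> psi (ladd x y) = ladd (psi x) (psi y).
Hypothesis psiopp : forall x, lmem x -> psi (lopp x) = lopp (psi x).
Hypothesis psi0 : psi l0 = l0.
Hypothesis psisurj : forall y, lmem y -> exists x, lmem x /\ psi x = y.
Hypothesis psiinj : forall x y, lmem x -> lmem y -> psi x = psi y -> x = y.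
Hypothesis Hpair : forall x y, lmem x -> lmem y -> Rpair R' (phi x) (psi y) = Rpair R x y.
Hypothesis Hroots : forall p, Rroots R' p <-> exists a, Rroots R a /\ p = phi a.
Hypothesis Hcor : forall a, Rroots R a -> Rcor R' (phi a) = psi (Rcor R a).

Hint Resolve rd_X rd_Xc : gm.
Let HX := rd_X R HR.
Let HXc := rd_Xc R HR.
Hint Resolve HX HXc : gm.

Lemma phiz z x : lmem x -> phi (zmul z x) = zmul z (phi x).
Proof. intros. apply (map_zmul _ _ phi); auto with gm. Qed.
Lemma psiz z x : lmem x -> psi (zmul z x) = zmul z (psi x).
Proof. intros. apply (map_zmul _ _ psi); auto with gm. Qed.
Lemma phisub x y : lmem x -> lmem y -> phi (lsub x y) = lsub (phi x) (phi y).
Proof. intros; unfold lsub; rewrite phiadd, phiopp; auto with gm. Qed.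
Lemma psisub x y : lmem x -> lmem y -> psi (lsub x y) = lsub (psi x) (psi y).
Proof. intros; unfold lsub; rewrite psiadd, psiopp; auto with gm. Qed.

Lemma TR_X : is_lattice (RX R').
Proof. split.
  - apply (transport_abgroup _ _ HX phi); auto.
  - apply (transport_free _ _ HX phi); auto. apply HR. Qed.
Lemma TR_Xc : is_lattice (RXc R').
Proof. split.
  - apply (transport_abgroup _ _ HXc psi); auto.
  - apply (transport_free _ _ HXc psi); auto. apply HR. Qed.

Lemma TR_rd : is_root_datum R'.
Proof.
  pose proof HR as HR0. destruct HR0 as (_ & _ & (P1 & P2 & P3 & P4) & Hrm & (l & Hl) & Hcm & Hci & H2 & Hs & Hsc & Hred).
  split; [apply TR_X|]. split; [apply TR_Xc|]. split; [|split; [|split; [|split; [|split; [|split; [|split; [|split]]]]]]].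
  - split; [|split; [|split]].
    + intros x' Hx' y1 y2 Hy1 Hy2.
      destruct (phisurj x' Hx') as (x & Hx & <-).
      destruct (psisurj y1 Hy1) as (a & Ha & <-). destruct (psisurj y2 Hy2) as (b & Hb & <-).
      rewrite <- psiadd, !Hpair by auto with gm. apply P1; auto.
    + intros y' Hy' x1 x2 Hx1 Hx2.
      destruct (psisurj y' Hy') as (y & Hy & <-).
      destruct (phisurj x1 Hx1) as (a & Ha & <-). destruct (phisurj x2 Hx2) as (b & Hb & <-).
      rewrite <- phiadd, !Hpair by auto with gm. apply (P2 y); auto.
    + intros g Hg. destruct (P3 (fun y => g (psi y))) as (x & Hx & Hr & Hu).
      { intros a b Ha Hb. rewrite psiadd; auto. }
      exists (phi x). split; auto. split.
      * intros y' Hy'. destruct (psisurj y' Hy') as (y & Hy & <-). rewrite Hpair; auto.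
      * intros x' Hx' Hr'. destruct (phisurj x' Hx') as (u & Hu' & <-). f_equal. apply Hu; auto.
        intros y Hy. rewrite Hr', Hpair; auto.
    + intros g Hg. destruct (P4 (fun x => g (phi x))) as (y & Hy & Hr & Hu).
      { intros a b Ha Hb. rewrite phiadd; auto. }
      exists (psi y). split; auto. split.
      * intros x' Hx'. destruct (phisurj x' Hx') as (x & Hx & <-). rewrite Hpair; auto.
      * intros y' Hy' Hr'. destruct (psisurj y' Hy') as (u & Hu' & <-). f_equal. apply Hu; auto.
        intros x Hx. rewrite Hr', Hpair; auto.
  - intros p Hp. apply Hroots in Hp as (a & Ha & ->). auto.
  - exists (map phi l). intros p. rewrite Hroots. split.
    + intros (a & Ha & ->). apply in_map, Hl; auto.
    + intros Hin. apply in_map_iff in Hin as (a & <- & Ha). exists a; split; auto. apply Hl; auto.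
  - intros p Hp. apply Hroots in Hp as (a & Ha & ->). rewrite Hcor; auto.
  - intros p q Hp Hq E. apply Hroots in Hp as (a & Ha & ->). apply Hroots in Hq as (b & Hb & ->).
    rewrite !Hcor in E by auto. f_equal. apply Hci; auto.
  - intros p Hp. apply Hroots in Hp as (a & Ha & ->). rewrite Hcor, Hpair; auto.
  - intros p q Hp Hq. apply Hroots in Hp as (a & Ha & ->). apply Hroots in Hq as (b & Hb & ->).
    apply Hroots. exists (lsub b (zmul (Rpair R b (Rcor R a)) a)). split; auto.
    rewrite Hcor, Hpair, phisub, phiz; auto with gm.
  - intros p q Hp Hq. apply Hroots in Hp as (a & Ha & ->). apply Hroots in Hq as (b & Hb & ->).
    destruct (Hsc a b Ha Hb) as (c & Hc & Ec). exists (phi c). split.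
    + apply Hroots; eauto.
    + rewrite !Hcor, Ec, Hpair, psisub, psiz; auto with gm.
  - intros p Hp Hp2. apply Hroots in Hp as (a & Ha & ->).
    rewrite <- phiz in Hp2 by auto with gm. apply Hroots in Hp2 as (c & Hc & Ec).
    apply phiinj in Ec; auto with gm. apply (Hred a); auto. rewrite Ec; auto.
Qed.

Lemma TR_iso : is_iso R R' phi.
Proof.
  split; [|split; auto].
  split; [split; auto|].
  set (tau := fun p => epsilon (inhabits (@l0 (RX R))) (fun x => lmem x /\ phi x = p)).
  assert (Htau : forall x, lmem x -> tau (phi x) = x).
  { intros x Hx. unfold tau. destruct (epsilon_spec (inhabits (@l0 (RX R)))
      (fun u => lmem u /\ phi u = phi x)) as [A B]; eauto. }
  set (fc := fun g => epsilon (inhabits (@l0 (RXc R))) (fun y => lmem y /\ psi y = g)).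
  assert (Hfc : forall y, lmem y -> fc (psi y) = y).
  { intros y Hy. unfold fc. destruct (epsilon_spec (inhabits (@l0 (RXc R)))
      (fun u => lmem u /\ psi u = psi y)) as [A B]; eauto. }
  assert (Hfc2 : forall g, lmem g -> lmem (fc g) /\ psi (fc g) = g).
  { intros g Hg. destruct (psisurj g Hg) as (y & Hy & <-). rewrite Hfc; auto. }
  exists tau. split; [|split; [|split; [|split]]].
  - intros p Hp. apply Hroots in Hp as (a & Ha & ->). rewrite Htau; auto. apply HR; auto.
  - intros p q Hp Hq E. apply Hroots in Hp as (a & Ha & ->). apply Hroots in Hq as (b & Hb & ->).
    rewrite !Htau in E by (apply HR; auto). subst; auto.
  - intros a Ha. exists (phi a). split; [apply Hroots; eauto|]. apply Htau. apply HR; auto.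
  - intros p Hp. apply Hroots in Hp as (a & Ha & ->). rewrite Htau; auto. apply HR; auto.
  - exists fc. split; [split|split].
    + intros g Hg; apply Hfc2; auto.
    + intros g g' Hg Hg'. destruct (psisurj g Hg) as (y & Hy & <-).
      destruct (psisurj g' Hg') as (y' & Hy' & <-). rewrite <- psiadd, !Hfc; auto with gm.
    + intros x g Hx Hg. destruct (psisurj g Hg) as (y & Hy & <-). rewrite Hfc, Hpair; auto.
    + intros p Hp. apply Hroots in Hp as (a & Ha & ->). rewrite Hcor, Hfc, Htau; auto; apply HR; auto.
Qed.
End TR.

Theorem mainTheorem6 (R1 R2 : preRootDatum) (f : RX R2 -> RX R1) :
  is_root_datum R1 -> is_root_datum R2 ->
  is_hom R2 R1 f -> surjective_on f ->
  let S2 := saturation (Rroots R2) in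
  let FS := image f S2 in
  let h1 : RX R1 -> quot (RX R1) FS := qproj FS in
  let h2 : rad_lattice R2 -> quot (RX R1) FS :=
    fun q => qproj FS (f (qrep S2 q)) in
  let CP := central_product R1 (radical R2) (quot (RX R1) FS) h1 h2 in
  let phi : RX R2 -> RX CP := fun x => (f x, qproj S2 x) in
  is_root_datum CP /\ is_iso R2 CP phi /\
  (forall x, lmem x -> f x = fst (phi x)).
Proof.
  intros HR1 HR2 Hf Hsurj S2 FS h1 h2 CP phi.
  pose proof (rd_X R1 HR1) as HX1. pose proof (rd_X R2 HR2) as HX2.
  pose proof (rd_Xc R1 HR1) as HXc1. pose proof (rd_Xc R2 HR2) as HXc2.
  destruct Hf as [[Hfm Hfa] (tau & Ht1 & Ht2 & Ht3 & Ht4 & fc & [Hfcm Hfca] & Hfct & Hfcr)].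
  assert (f0 : f l0 = l0).
  { apply (g_cancel _ HX1 (f l0)); auto with gm. rewrite g_addr0, <- Hfa, g_add0; auto with gm. }
  assert (fopp : forall x, lmem x -> f (lopp x) = lopp (f x)).
  { intros x Hx. apply (g_cancel _ HX1 (f x)); auto with gm.
    rewrite <- Hfa, !g_addrN, f0; auto with gm. }
  assert (fsub : forall x y, lmem x -> lmem y -> f (lsub x y) = lsub (f x) (f y)).
  { intros; unfold lsub; rewrite Hfa, fopp; auto with gm. }
  assert (HS2 : subgrp S2) by (apply sat_subgrp; auto; apply rd_rm; auto).
  assert (HS2m : forall x, S2 x -> lmem x) by apply HS2.
  assert (HFS : subgrp FS).
  { split; [|split; [|split]].
    - intros y (x & Hx & _ & ->); auto.
    - exists l0. split; [auto with gm|split; [apply (sg_0 _ _ HS2)|auto]].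
    - intros y y' (x & Hx & Sx & ->) (x' & Hx' & Sx' & ->). exists (ladd x x').
      split; [auto with gm|split; [apply (sg_add _ _ HS2); auto|rewrite Hfa; auto]].
    - intros y (x & Hx & Sx & ->). exists (lopp x).
      split; [auto with gm|split; [apply (sg_opp _ _ HS2); auto|rewrite fopp; auto]]. }
  assert (h2c : forall x, lmem x -> h2 (qclass S2 x) = qclass FS (f x)).
  { intros x Hx. unfold h2, qproj. destruct (qrep_class _ HX2 S2 HS2 x Hx) as [A B].
    apply (qclass_eq _ HX1 FS HFS); try (apply Hfm; auto).
    rewrite <- fsub by auto. exists (lsub (qrep S2 (qclass S2 x)) x).
    split; [apply (g_memS _ HX2); auto|split; auto]. }
  assert (phimem : forall x, lmem x -> lmem (phi x)).
  { intros x Hx. split; [split|].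
    - simpl. auto.
    - simpl. apply quot_memc; auto.
    - simpl. unfold qproj. rewrite h2c; auto. }
  assert (phiadd : forall x y, lmem x -> lmem y -> phi (ladd x y) = ladd (phi x) (phi y)).
  { intros x y Hx Hy. unfold phi, qproj.
    rewrite <- (quot_add _ HX2 S2 HS2 x y Hx Hy), Hfa by auto. reflexivity. }
  assert (phiopp : forall x, lmem x -> phi (lopp x) = lopp (phi x)).
  { intros x Hx. unfold phi, qproj.
    rewrite <- (quot_opp _ HX2 S2 HS2 x Hx), fopp by auto. reflexivity. }
  assert (phi0 : phi l0 = l0).
  { unfold phi, qproj. simpl. rewrite f0. reflexivity. }
  assert (phisurj : forall p, lmem p -> exists x, lmem x /\ phi x = p).
  { intros [x1 q] [[Hx1 Hq] Hb]. simpl in Hx1, Hq, Hb. destruct Hq as (x & Hx & ->). unfold h1, qproj in Hb.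
    rewrite h2c in Hb by auto.
    apply (qclass_inv _ HX1 FS HFS) in Hb; auto.
    destruct Hb as (s & Hs & Ss & Es).
    exists (ladd x s). split; auto with gm. unfold phi, qproj. f_equal.
    - rewrite Hfa, <- Es by auto. rewrite (g_addC _ HX1) by auto with gm.
      apply (g_subK _ HX1); auto with gm.
    - apply (qclass_eq _ HX2 S2 HS2); auto with gm.
      replace (lsub (ladd x s) x) with s; auto.
      unfold lsub. rewrite (g_addC _ HX2) by auto with gm. rewrite (g_addKr _ HX2); auto. }
  assert (phiinj : forall x y, lmem x -> lmem y -> phi x = phi y -> x = y).
  { intros x y Hx Hy E. unfold phi, qproj in E. injection E as E1 E2.
    apply (qclass_inv _ HX2 S2 HS2) in E2; auto.
    apply (g_subeq0 _ HX2); auto. apply (orth_zero_main R2 HR2); auto with gm.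
    intros a Ha. destruct (Ht3 a Ha) as (al & Hal & <-). rewrite <- Hfcr by auto.
    rewrite Hfct, fsub, E1, (g_subrr _ HX1), (pr_x0 R1 HR1); auto with gm.
    all: apply (rd_cm R1 HR1); auto. }
  set (phiinv := fun p : RX CP => epsilon (inhabits (@l0 (RX R2))) (fun x => lmem x /\ phi x = p)).
  assert (Hpi : forall p, lmem p -> lmem (phiinv p) /\ phi (phiinv p) = p).
  { intros p Hp. unfold phiinv. apply epsilon_spec. apply phisurj; auto. }
  assert (Hpi2 : forall x, lmem x -> phiinv (phi x) = x).
  { intros x Hx. destruct (Hpi (phi x) (phimem x Hx)) as [A B]. apply phiinj; auto. }
  assert (HCP : is_abgroup (RX CP)) by (apply (transport_abgroup _ _ HX2 phi); auto).
  assert (piadd : forall p p', lmem p -> lmem p' -> phiinv (ladd p p') = ladd (phiinv p) (phiinv p')).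
  { intros p p' Hp Hp'. destruct (Hpi p) as [A B]; auto. destruct (Hpi p') as [C D]; auto.
    rewrite <- (Hpi2 (ladd (phiinv p) (phiinv p'))) by auto with gm.
    rewrite phiadd, B, D by auto. reflexivity. }
  set (psi := fun y : RXc R2 => (fun p : RX CP =>
     if excluded_middle_informative (lmem p) then Rpair R2 (phiinv p) y else 0) : RXc CP).
  assert (psimem : forall y, lmem y -> lmem (psi y)).
  { intros y Hy. split.
    - intros p p' Hp Hp'. unfold psi.
      repeat (destruct (excluded_middle_informative _) as [?|Hn]; [|exfalso; apply Hn; auto with gm]).
      rewrite piadd by auto. apply (rd_P2 R2 HR2); auto; apply Hpi; auto.
    - intros p Hp. unfold psi. destruct (excluded_middle_informative _); tauto. }
  assert (psiadd : forall y y', lmem y -> lmem y' -> psi (ladd y y') = ladd (psi y) (psi y')).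
  { intros y y' Hy Hy'. apply functional_extensionality; intro p. unfold psi; simpl.
    destruct (excluded_middle_informative _) as [H|H]; auto.
    apply (rd_P1 R2 HR2); auto. apply Hpi; auto. }
  assert (psiopp : forall y, lmem y -> psi (lopp y) = lopp (psi y)).
  { intros y Hy. apply functional_extensionality; intro p. unfold psi; simpl.
    destruct (excluded_middle_informative _) as [H|H]; auto.
    apply (aZ_N _ HXc2 (Rpair R2 (phiinv p))); auto. apply (rd_P1 R2 HR2); apply Hpi; auto. }
  assert (psi0 : psi l0 = l0).
  { apply functional_extensionality; intro p. unfold psi; simpl.
    destruct (excluded_middle_informative _) as [H|H]; auto.
    apply (pr_0y R2 HR2). apply Hpi; auto. }
  assert (psisurj : forall g, lmem g -> exists y, lmem y /\ psi y = g).
  { intros g [Hg1 Hg2]. pose proof HR2 as HR2b. destruct HR2b as (_&_&(_&_&_&P4)&_).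
    destruct (P4 (fun x => g (phi x))) as (y & Hy & Hr & _).
    { intros x x' Hx Hx'. rewrite phiadd by auto. apply Hg1; auto. }
    exists y. split; auto. apply functional_extensionality; intro p. unfold psi.
    destruct (excluded_middle_informative _) as [H|H]; [|symmetry; apply Hg2; auto].
    destruct (Hpi p H) as [A B]. rewrite <- Hr by auto. rewrite B; auto. }
  assert (psiinj : forall y y', lmem y -> lmem y' -> psi y = psi y' -> y = y').
  { intros y y' Hy Hy' E. pose proof HR2 as HR2b. destruct HR2b as (_&_&(_&_&_&P4)&_).
    destruct (P4 (fun x => Rpair R2 x y)) as (y0 & Hy0 & _ & Hu).
    { apply (rd_P2 R2 HR2); auto. }
    rewrite (Hu y), (Hu y'); auto.
    intros x Hx. assert (E' := f_equal (fun g : RXc CP => g (phi x)) E). unfold psi in E'. simpl in E'.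
    destruct (excluded_middle_informative _) as [H|H]; [|exfalso; apply H; apply phimem; auto].
    rewrite Hpi2 in E' by auto. auto. }
  assert (Hpair : forall x y, lmem x -> lmem y -> Rpair CP (phi x) (psi y) = Rpair R2 x y).
  { intros x y Hx Hy. unfold psi. simpl.
    destruct (excluded_middle_informative _) as [H|H]; [rewrite Hpi2; auto|exfalso; apply H, phimem; auto]. }
  assert (Sroot : forall al, Rroots R1 al -> qclass S2 (tau al) = qclass S2 l0).
  { intros al Hal. apply (qclass_eq _ HX2 S2 HS2); auto with gm; try (apply (rd_rm R2 HR2); auto).
    rewrite (g_subr0 _ HX2) by (apply (rd_rm R2 HR2); auto).
    apply sat_incl; auto. apply (rd_rm R2 HR2). }
  assert (Hroots : forall p, Rroots CP p <-> exists a, Rroots R2 a /\ p = phi a).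
  { intros [x1 q]. simpl. split.
    - intros [[Hr Hq]|[_ []]]. exists (tau x1). split; auto. unfold phi, qproj. f_equal.
      + rewrite Ht4; auto.
      + rewrite Sroot, Hq; auto.
    - intros (a & Ha & E). destruct (Ht3 a Ha) as (al & Hal & <-). unfold phi, qproj in E.
      injection E as -> ->. left. split; [rewrite Ht4; auto|]. rewrite Sroot; auto. }
  assert (Hcor : forall a, Rroots R2 a -> Rcor CP (phi a) = psi (Rcor R2 a)).
  { intros a Ha. destruct (Ht3 a Ha) as (al & Hal & <-).
    apply functional_extensionality; intro p. unfold psi. simpl. unfold iotaB.
    destruct (excluded_middle_informative (Rroots R1 (f (tau al)))) as [Hr|Hr];
      [|exfalso; apply Hr; rewrite Ht4; auto].
    destruct (excluded_middle_informative _) as [H1|H1];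
      destruct (excluded_middle_informative _) as [H2|H2].
    2: { exfalso. apply H2. destruct H1 as [H1' _]. exact H1'. }
    2: { exfalso. apply H1. split; [exact H2|destruct H2 as [_ Hb]; exact Hb]. }
    2: reflexivity.
    destruct (Hpi p H2) as [A B].
    assert (Ef := f_equal fst B). simpl in Ef.
    destruct H2 as [[_ Hq] _].
    simpl. rewrite (pr_0y R2 HR2 (qrep _ (snd p))) by (apply (qrep_mem _ _ _ Hq)).
    rewrite <- Ef.
    rewrite Ht4 by auto. rewrite <- Hfcr, Hfct by (auto; apply (rd_cm R1 HR1); auto). lia. }
  split; [|split].
  - apply (TR_rd R2 CP HR2 phi psi); auto.
  - apply (TR_iso R2 CP HR2 phi psi); auto.
  - intros x Hx. reflexivity.
Qed.
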